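(* For every combinatorial auction with SOS valuations and single-dimensional signals from a signal space of size $k\ge2$, i.e. $s_i\in\{0,1,\dots,k-1\}$ for all $i$, the mechanism $k$-HL is universally ex-post IC-IR and gives a $(k+3)$-approximation to the optimal social welfare: for every true profile $\mathbf{s}$, its expected welfare is at least $\frac{1}{k+3}\max_{T}\sum_i v_{iT_i}(\mathbf{s})$ over allocations $T$.
   Context: Setting: $n$ agents, $m$ items; agent $i$ has private signal $s_i\in\{0,\dots,k-1\}$; her value for bundle $T$ is $v_{iT}(\mathbf{s})\ge0$, public, weakly increasing in each coordinate, strictly in $s_i$; each $v_{iT}$ is SOS: for every coordinate $j$, $s_j$, $\delta\ge0$, $\mathbf{s}'_{-j}\le\mathbf{s}_{-j}$ coordinate-wise, $v(\mathbf{s}'_{-j},s_j+\delta)-v(\mathbf{s}'_{-j},s_j)\ge v(\mathbf{s}_{-j},s_j+\delta)-v(\mathbf{s}_{-j},s_j)$. Allocations assign disjoint bundles; agent utility is value of received bundle at the true profile minus payment; ex-post IC/IR and universal ex-post IC-IR as usual. Random Threshold (on reports $\mathbf{s}$): choose $\ell$ uniformly in $\{1,\dots,k-1\}$; $N_{\ge\ell}=\{i:s_i\ge\ell\}$, $N_{<\ell}$ the rest; for $i\in N_{\ge\ell}$, $\bar v_{iT}=v_{iT}(\mathbf{s}_{N_{<\ell}},\boldsymbol{\ell}_{N_{\ge\ell}})$, else $\bar v_{iT}=0$; allocate $\bar T\in\arg\max\sum_{i\in N_{\ge\ell}}\bar v_{i\bar T_i}$ among agents of $N_{\ge\ell}$;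 agent receiving $\bar T_i$ pays $v_{i\bar T_i}(\mathbf{s}_{-i},\ell-1)$. Random Sampling: split agents uniformly at random into $A,B$; for $i\in B$, $\tilde v_{iT}=v_{iT}(\mathbf{s}_A,\mathbf{0}_B)$, for $i\in A$, $\tilde v_{iT}=0$; allocate $\tilde T\in\arg\max\sum_{i\in B}\tilde v_{i\tilde T_i}$ among agents of $B$; no payments. $k$-HL: run Random Threshold with probability $\frac{k-1}{k+3}$, otherwise Random Sampling. *)

(* Defs.v *)
From HB Require Import structures.
From mathcomp Require Import all_boot all_order all_algebra.
Set Implicit Arguments. Unset Strict Implicit. Unset Printing Implicit Defensive.
Import Order.TTheory GRing.Theory Num.Theory.
Local Open Scope ring_scope.

Notation profile n k := {ffun 'I_n -> 'I_k}.

(* v i T s = value of agent i for bundle T (subset of items 'I_m) at profile s *)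
Notation valuation R n m k := ('I_n -> {set 'I_m} -> profile n k -> R).

Definition upd n k (s : profile n k) (i : 'I_n) (x : 'I_k) : profile n k :=
  [ffun j => if j == i then x else s j].

Definition ordPred k (l : 'I_k) : 'I_k :=
  Ordinal (leq_ltn_trans (leq_pred l) (ltn_ord l)).

(* the signal value 0, as an element of 'I_k (k is inhabited via x) *)
Definition ordZero k (x : 'I_k) : 'I_k :=
  Ordinal (leq_ltn_trans (leq0n x) (ltn_ord x)).

Definition valid_valuations (R : realFieldType) n m k (v : valuation R n m k) :=
  [/\
      forall i T s, 0 <= v i T s,
      forall i s, v i set0 s = 0,
      forall i T s j (x y : 'I_k), (x <= y)%N -> v i T (upd s j x) <= v i T (upd s j y),
      forall i T s (x y : 'I_k), T != set0 -> (x < y)%N ->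
        v i T (upd s i x) < v i T (upd s i y) &
      forall i T j (s s' : profile n k) (x y : 'I_k), (x <= y)%N ->
        (forall t, t != j -> (s' t <= s t)%N) ->
        v i T (upd s j y) - v i T (upd s j x) <=
        v i T (upd s' j y) - v i T (upd s' j x)].

Definition allocation n m := 'I_n -> {set 'I_m}.

Definition feasible n m (T : allocation n m) :=
  forall i j, i != j -> [disjoint T i & T j].

Definition feasible_on n m (S : {set 'I_n}) (T : allocation n m) :=
  feasible T /\ forall i, i \notin S -> T i = set0.

Definition argmax_rule (R : realFieldType) n m
  (choose : {set 'I_n} -> ('I_n -> {set 'I_m} -> R) -> allocation n m) :=
  forall S w, feasible_on S (choose S w) /\
    forall T, feasible_on S T ->
      \sum_(i in S) w i (T i) <= \sum_(i in S) w i (choose S w i).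

Definition mechanism (R : realFieldType) n m k :=
  profile n k -> allocation n m * ('I_n -> R).

Definition capAt n k (l : 'I_k) (s : profile n k) : profile n k :=
  [ffun j => if (l <= s j)%N then l else s j].

Definition RT_mech (R : realFieldType) n m k (v : valuation R n m k)
  (choose : {set 'I_n} -> ('I_n -> {set 'I_m} -> R) -> allocation n m)
  (l : 'I_k) : mechanism R n m k :=
  fun s =>
    let S := [set i | (l <= s i)%N] in
    let w := fun i T => if i \in S then v i T (capAt l s) else 0 in
    let A := choose S w in
    (A, fun i => if i \in S then v i (A i) (upd s i (ordPred l)) else 0).

Definition zeroOn n k (A : {set 'I_n}) (s : profile n k) : profile n k :=
  [ffun j => if j \in A then s j else ordZero (s j)].

Definition RS_mech (R : realFieldType) n m k (v : valuation R n m k)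
  (choose : {set 'I_n} -> ('I_n -> {set 'I_m} -> R) -> allocation n m)
  (A : {set 'I_n}) : mechanism R n m k :=
  fun s =>
    let B := ~: A in
    let w := fun i T => if i \in B then v i T (zeroOn A s) else 0 in
    (choose B w, fun _ => 0).

Definition exPost_IC_IR (R : realFieldType) n m k (v : valuation R n m k)
  (M : mechanism R n m k) :=
  forall (s : profile n k) (i : 'I_n) (x : 'I_k),
    let u r := v i ((M r).1 i) s - (M r).2 i in
    0 <= u s /\ u (upd s i x) <= u s.

Definition welfare (R : realFieldType) n m k (v : valuation R n m k)
  (T : allocation n m) (s : profile n k) : R :=
  \sum_i v i (T i) s.

(* expected welfare of k-HL at truthful profile s:
   w.p. (k-1)/(k+3) Random Threshold with l uniform in {1,...,k-1},
   otherwise Random Sampling with a uniformly random split A (B = ~: A). *)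
Definition kHL_welfare (R : realFieldType) n m k (v : valuation R n m k)
  (chRT chRS : {set 'I_n} -> ('I_n -> {set 'I_m} -> R) -> allocation n m)
  (s : profile n k) : R :=
  (k.-1)%:R / (k + 3)%:R *
    ((k.-1)%:R^-1 * \sum_(l : 'I_k | (0 < l)%N) welfare v (RT_mech v chRT l s).1 s)
  + (1 - (k.-1)%:R / (k + 3)%:R) *
    ((2 ^ n)%:R^-1 * \sum_(A : {set 'I_n}) welfare v (RS_mech v chRS A s).1 s).

(* Main.v *)
Require Import Defs.
From HB Require Import structures.
From mathcomp Require Import all_boot all_order all_algebra.
Import Order.TTheory GRing.Theory Num.Theory.
Set Implicit Arguments. Unset Strict Implicit.
Local Open Scope ring_scope.

Lemma upd_eq n k (s : profile n k) j x : s j = x -> upd s j x = s.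
Proof. by move=> <-; apply/ffunP=> t; rewrite ffunE; case: eqP => // ->. Qed.

Lemma upd_upd n k (s : profile n k) j x y : upd (upd s j x) j y = upd s j y.
Proof. by apply/ffunP=> t; rewrite !ffunE; case: eqP. Qed.

Definition mono1 (R : realFieldType) n k (f : profile n k -> R) :=
  forall s j (x y : 'I_k), (x <= y)%N -> f (upd s j x) <= f (upd s j y).

Definition mixL n k (a b : profile n k) (r : seq 'I_n) : profile n k :=
  [ffun j => if j \in r then b j else a j].

Lemma mono_all (R : realFieldType) n k (f : profile n k -> R) (a b : profile n k) :
  mono1 f -> (forall t, (a t <= b t)%N) -> f a <= f b.
Proof.
move=> mf hab.
have -> : a = mixL a b [::] by apply/ffunP=> t; rewrite ffunE.
have -> : b = mixL a b (enum 'I_n) by apply/ffunP=> t; rewrite ffunE mem_enum.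
elim: (enum 'I_n) => // c r IH; apply: (le_trans IH).
have -> : mixL a b (c :: r) = upd (mixL a b r) c (b c).
  apply/ffunP=> t; rewrite !ffunE inE; case: eqP => [->|] //.
rewrite -{1}(upd_eq (erefl (mixL a b r c))); apply: mf.
by rewrite ffunE; case: ifP.
Qed.

From mathcomp Require Import zify ring lra.

Definition sos1 (R : realFieldType) n k (f : profile n k -> R) :=
  forall j (s s' : profile n k) (x y : 'I_k), (x <= y)%N ->
    (forall t, t != j -> (s' t <= s t)%N) ->
    f (upd s j y) - f (upd s j x) <= f (upd s' j y) - f (upd s' j x).

Lemma tele (R : realFieldType) n k (f : profile n k -> R) (s : profile n k) i :
  sos1 f -> (forall s, 0 <= f s) ->
  forall t (Ht : (t < k)%N), (t <= s i)%N ->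
  f (upd s i (Ordinal Ht)) <=
    \sum_(l : 'I_k | (0 < l <= t)%N) f (capAt l s) + f (upd s i (ordZero (s i))).
Proof.
move=> hs h0; elim=> [|t IH] Ht hts.
  have -> : Ordinal Ht = ordZero (s i) by apply: val_inj.
  rewrite big_pred0 ?add0r // => l; case: l => l /= _; lia.
have Ht' : (t < k)%N by lia.
move: (IH Ht' (ltnW hts)); set S := \sum_(l | _) _ => hIH.
rewrite (bigD1 (Ordinal Ht)) /=; last by rewrite /=; lia.
rewrite (eq_bigl (fun l : 'I_k => (0 < l <= t)%N)); last first.
  by move=> l; rewrite -val_eqE /=; lia.
rewrite -/S.
have hcap : capAt (Ordinal Ht) s i = Ordinal Ht.
  by apply: val_inj; rewrite ffunE /=; case: ifP => //; lia.
have := hs i s (capAt (Ordinal Ht) s) (Ordinal Ht') (Ordinal Ht) (leqnSn t).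
have hle : forall t0, t0 != i -> (capAt (Ordinal Ht) s t0 <= s t0)%N.
  by move=> t0 _; rewrite ffunE; case: ifP => //; lia.
move=> /(_ hle).
rewrite (upd_eq hcap).
have := h0 (upd (capAt (Ordinal Ht) s) i (Ordinal Ht')).
move: hIH; lra.
Qed.

Lemma zeroOn_U1 n k (s : profile n k) (c : 'I_n) (Y : {set 'I_n}) :
  zeroOn (c |: Y) s = upd (zeroOn Y s) c (s c).
Proof. by apply/ffunP=> t; rewrite !ffunE !inE; case: eqP => [->|]. Qed.

Lemma zeroOn_notin n k (s : profile n k) (c : 'I_n) (Y : {set 'I_n}) : c \notin Y ->
  zeroOn Y s = upd (zeroOn Y s) c (ordZero (s c)).
Proof. by move=> cY; rewrite upd_eq // ffunE (negbTE cY). Qed.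

Lemma zeroOn_mono n k (s : profile n k) (Y Z : {set 'I_n}) : Y \subset Z ->
  forall t, (zeroOn Y s t <= zeroOn Z s t)%N.
Proof.
move=> /subsetP YZ t; rewrite !ffunE.
case: ifP => [/YZ -> //|_]; by case: ifP.
Qed.

Lemma subadd (R : realFieldType) n k (f : profile n k -> R) (s : profile n k) :
  mono1 f -> sos1 f -> (forall s, 0 <= f s) ->
  forall X Y, f (zeroOn (X :|: Y) s) <= f (zeroOn X s) + f (zeroOn Y s).
Proof.
move=> hm hs h0 X Y; rewrite -(set_enum Y).
elim: (enum Y) => [|c r IH].
  have -> : [set x in [::]] = set0 :> {set 'I_n} by apply/setP=> x; rewrite !inE.
  by rewrite setU0 lerDl.
rewrite set_cons; set Y' := [set x in r] in IH *.
have mYY : f (zeroOn Y' s) <= f (zeroOn (c |: Y') s).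
  by apply: mono_all => //; apply: zeroOn_mono; apply: subsetUr.
case cX : (c \in X).
  have -> : X :|: (c |: Y') = X :|: Y'.
    by apply/setP=> x; rewrite !inE; case: eqP => // ->; rewrite cX.
  by apply: (le_trans IH); rewrite lerD2l.
case cY : (c \in Y').
  by have -> : c |: Y' = Y' by apply/setP=> x; rewrite !inE; case: eqP => // ->; move: cY; rewrite inE => ->.
rewrite setUCA.
have := hs c (zeroOn (X :|: Y') s) (zeroOn Y' s) (ordZero (s c)) (s c) (leq0n _).
have hle : forall t, t != c -> (zeroOn Y' s t <= zeroOn (X :|: Y') s t)%N.
  by move=> t _; apply: zeroOn_mono; apply: subsetUr.
move=> /(_ hle).
have cY' : c \notin Y' by rewrite cY.
have cXY : c \notin X :|: Y' by rewrite inE cX cY.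
rewrite -!zeroOn_U1 -(zeroOn_notin s cY') -(zeroOn_notin s cXY).
move: IH; lra.
Qed.

Lemma card_sets n : #|{set 'I_n}| = (2 ^ n)%N.
Proof. by rewrite -cardsT -powersetT card_powerset cardsT card_ord. Qed.

Lemma sample (R : realFieldType) n k (f : profile n k -> R) (s : profile n k) i :
  mono1 f -> sos1 f -> (forall s, 0 <= f s) ->
  f (upd s i (ordZero (s i))) <=
  4 / (2 ^ n)%:R * \sum_(A : {set 'I_n}) (if i \in ~: A then f (zeroOn A s) else 0).
Proof.
move=> hm hs h0.
set g := fun A => f (zeroOn A s).
set G := \sum_(A : {set 'I_n}) _.
have hG : \sum_(A : {set 'I_n}) g (A :\ i) = 2 * G.
  rewrite (bigID (fun A : {set 'I_n} => i \in A)) /= mulr2n mulrDl mul1r.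
  congr (_ + _).
    pose t := fun A : {set 'I_n} => if i \in A then A :\ i else i |: A.
    have tK : involutive t.
      move=> A; rewrite /t; case iA: (i \in A).
        by rewrite setD11 setD1K.
      by rewrite setU11 setU1K ?iA.
    rewrite (reindex_inj (inv_inj tK)) /G big_mkcond /=; apply: eq_bigr => A _.
    rewrite /t inE; case iA: (i \in A) => /=.
      by rewrite setD11.
    by rewrite setU11 setU1K ?iA.
  rewrite /G big_mkcond /=; apply: eq_bigr => A _.
  rewrite inE; case: ifP => iA //=.
  by congr g; apply/setP => x; rewrite !inE; case: eqP => // ->; apply/esym/negbTE.
have hC : \sum_(A : {set 'I_n}) g (A :\ i) = \sum_(A : {set 'I_n}) g (~: A :\ i).
  by rewrite (reindex_inj (@setC_inj _)).
have hsum : \sum_(A : {set 'I_n}) g (~: [set i]) <=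
            \sum_(A : {set 'I_n}) (g (A :\ i) + g (~: A :\ i)).
  apply: ler_sum => A _.
  have -> : ~: [set i] = (A :\ i) :|: (~: A :\ i).
    by apply/setP => x; rewrite !inE; case: (x == i); case: (x \in A).
  exact: subadd.
rewrite big_split /= -hC hG sumr_const card_sets in hsum.
have -> : upd s i (ordZero (s i)) = zeroOn (~: [set i]) s.
  by apply/ffunP => x; rewrite !ffunE !inE; case: eqP => [->|].
rewrite -/(g _).
have hpos : 0 < (2 ^ n)%:R :> R by rewrite ltr0n expn_gt0.
rewrite mulrAC ler_pdivlMr // -mulr_natr -/(g _). rewrite -mulr_natr in hsum.
move: hsum; lra.
Qed.

Lemma notin0 (R : realFieldType) n m ch (S : {set 'I_n}) (w : 'I_n -> {set 'I_m} -> R) i :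
  argmax_rule ch -> i \notin S -> ch S w i = set0.
Proof. by move=> hch iS; have [[_ ->]] := hch S w. Qed.

Lemma RT_ic (R : realFieldType) n m k (v : valuation R n m k) ch (l : 'I_k) :
  valid_valuations v -> argmax_rule ch -> exPost_IC_IR v (RT_mech v ch l).
Proof.
move=> [h0 he hm _ _] hch s i x /=.
set S := [set i0 | (l <= s i0)%N].
set Sr := [set i0 | (l <= upd s i x i0)%N].
set w := fun (i0 : 'I_n) (T : {set 'I_m}) => if i0 \in S then v i0 T (capAt l s) else 0.
set wr := fun (i0 : 'I_n) (T : {set 'I_m}) => if i0 \in Sr then v i0 T (capAt l (upd s i x)) else 0.
have hpl : (ordPred l <= l)%N by rewrite /= leq_pred.
have hux : upd s i x i = x by rewrite ffunE eqxx.
case: (leqP l (s i)) => hsi.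
  have iS : i \in S by rewrite inE.
  rewrite iS; split.
    rewrite subr_ge0 -{2}(upd_eq (erefl (s i))); apply: hm.
    exact: leq_trans hpl hsi.
  case: (leqP l x) => hx.
    have eS : Sr = S.
      apply/setP => j; rewrite !inE ffunE; case: eqP => // ->.
      by rewrite hx hsi.
    have ec : capAt l (upd s i x) = capAt l s.
      apply/ffunP => j; rewrite !ffunE; case: eqP => // ->.
      by rewrite hx hsi.
    have ew : wr = w by rewrite /wr /w eS ec.
    by rewrite ew eS iS upd_upd.
  have iSr : i \notin Sr by rewrite inE hux -ltnNge.
  rewrite (negbTE iSr) (notin0 _ hch iSr) he subr0 subr_ge0.
  rewrite -{2}(upd_eq (erefl (s i))); apply: hm.
  exact: leq_trans hpl hsi.
have iS : i \notin S by rewrite inE -ltnNge.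
rewrite (negbTE iS) (notin0 _ hch iS) he subr0; split => //.
case: (leqP l x) => hx.
  have iSr : i \in Sr by rewrite inE hux.
  rewrite iSr upd_upd subr_le0 -{1}(upd_eq (erefl (s i))); apply: hm.
  by rewrite /= -ltnS prednK // (leq_ltn_trans _ hsi).
have iSr : i \notin Sr by rewrite inE hux -ltnNge.
by rewrite (negbTE iSr) (notin0 _ hch iSr) he subr0.
Qed.

Lemma RS_ic (R : realFieldType) n m k (v : valuation R n m k) ch (A : {set 'I_n}) :
  valid_valuations v -> argmax_rule ch -> exPost_IC_IR v (RS_mech v ch A).
Proof.
move=> [h0 he _ _ _] hch s i x /=.
split; first by rewrite subr0 h0.
case iA: (i \in ~: A).
  have -> : zeroOn A (upd s i x) = zeroOn A s.
    apply/ffunP => j; rewrite !ffunE; case: eqP => [->|//].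
    move: iA; rewrite inE => /negbTE ->; exact: val_inj.
  by [].
have iA' : i \notin ~: A by rewrite iA.
by rewrite !(notin0 _ hch iA') he.
Qed.

Lemma restr_feas n m (T : allocation n m) (S : {set 'I_n}) : feasible T ->
  feasible_on S (fun i => if i \in S then T i else set0).
Proof.
move=> hT; split => [i j ij|i /negbTE -> //].
case: ifP => _; case: ifP => _; rewrite -setI_eq0 ?setI0 ?set0I //.
by rewrite setI_eq0; apply: hT.
Qed.

Lemma alloc_lb (R : realFieldType) n m k (v : valuation R n m k) ch (S : {set 'I_n})
  (p s : profile n k) (T : allocation n m) :
  valid_valuations v -> argmax_rule ch -> feasible T -> (forall t, (p t <= s t)%N) ->
  \sum_(i in S) v i (T i) p <=
  \sum_i v i (ch S (fun i T => if i \in S then v i T p else 0) i) s.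
Proof.
move=> [h0 he hm _ _] hch hT hps.
set w := fun (i : 'I_n) (T0 : {set 'I_m}) => if i \in S then v i T0 p else 0.
have [_ hopt] := hch S w.
have := hopt _ (restr_feas S hT).
rewrite (eq_bigr (fun i => v i (T i) p)); last by move=> i iS; rewrite /w iS.
move/le_trans; apply.
rewrite [X in _ <= X](bigID (fun i => i \in S)) /= -[X in X <= _]addr0.
apply: lerD; last by apply: sumr_ge0 => i _; apply: h0.
apply: ler_sum => i iS; rewrite /w iS.
by apply: mono_all => //; apply: hm.
Qed.

Lemma approx (R : realFieldType) (n m k : nat) (v : valuation R n m k)
  (chRT chRS : {set 'I_n} -> ('I_n -> {set 'I_m} -> R) -> allocation n m)
  (s : profile n k) (T : allocation n m) :
  valid_valuations v -> argmax_rule chRT -> argmax_rule chRS -> feasible T ->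
  welfare v T s <= \sum_(l : 'I_k | (0 < l)%N) welfare v (RT_mech v chRT l s).1 s
     + 4 / (2 ^ n)%:R * \sum_(A : {set 'I_n}) welfare v (RS_mech v chRS A s).1 s.
Proof.
move=> hv hRT hRS hT; have [h0 he hm _ hsos] := hv.
rewrite /welfare.
have per : forall i, v i (T i) s <=
    \sum_(l : 'I_k | (0 < l)%N) (if (l <= s i)%N then v i (T i) (capAt l s) else 0)
    + 4 / (2 ^ n)%:R * \sum_(A : {set 'I_n})
        (if i \in ~: A then v i (T i) (zeroOn A s) else 0).
  move=> i.
  have := @tele R n k (v i (T i)) s i (hsos i (T i)) (h0 i (T i)) _ (ltn_ord (s i)) (leqnn _).
  have es : s i = Ordinal (ltn_ord (s i)) by apply: val_inj.
  rewrite (upd_eq es) -big_mkcondr => h1.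
  apply: (le_trans h1); rewrite lerD2l.
  exact: (@sample R n k (v i (T i)) s i (hm i (T i)) (hsos i (T i)) (h0 i (T i))).
apply: (le_trans (ler_sum _ (fun i _ => per i))).
rewrite big_split /= -mulr_sumr; apply: lerD.
  rewrite exchange_big /=; apply: ler_sum => l _.
  rewrite -big_mkcond /=.
  rewrite (eq_bigl (fun i => i \in [set j | (l <= s j)%N])); last by move=> i; rewrite inE.
  rewrite /RT_mech /=; apply: (@alloc_lb R n m k v chRT _ (capAt l s) s T hv hRT hT) => t; rewrite ffunE; case: ifP => //; lia.
apply: ler_wpM2l; first by rewrite divr_ge0 // ler0n.
rewrite exchange_big /=; apply: ler_sum => A _.
rewrite -big_mkcond /=.
rewrite /RS_mech /=; apply: (@alloc_lb R n m k v chRS _ (zeroOn A s) s T hv hRS hT) => t; rewrite ffunE; case: ifP => //.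
Qed.

Lemma alg (R : realFieldType) (a b N X Y O : R) : 0 < a -> 0 < N -> b = a + 4 ->
  O <= X + 4 / N * Y -> O / b <= a / b * (a^-1 * X) + (1 - a / b) * (N^-1 * Y).
Proof.
move=> ha hN hb hO.
have hb0 : 0 < b by rewrite hb; apply: ltr_wpDr => //.
have -> : a / b * (a^-1 * X) + (1 - a / b) * (N^-1 * Y) = (X + 4 / N * Y) / b.
  rewrite hb; field; apply/and3P; split.
  - by rewrite lt0r_neq0 // ltr_wpDr.
  - exact: lt0r_neq0.
  - exact: lt0r_neq0.
by apply: ler_wpM2r => //; rewrite invr_ge0 ltW.
Qed.

Unset Implicit Arguments.
Set Strict Implicit.

Theorem mainTheorem8 (R : realFieldType) (n m k : nat) (v : valuation R n m k)
  (chRT chRS : {set 'I_n} -> ('I_n -> {set 'I_m} -> R) -> allocation n m) :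
  (2 <= k)%N ->
  valid_valuations v ->
  argmax_rule chRT -> argmax_rule chRS ->
  (* universally ex-post IC-IR: every deterministic mechanism in the support *)
  ((forall l : 'I_k, (0 < l)%N -> exPost_IC_IR v (RT_mech v chRT l)) /\
   (forall A : {set 'I_n}, exPost_IC_IR v (RS_mech v chRS A))) /\
  (* (k+3)-approximation of the optimal social welfare *)
  (forall (s : profile n k) (T : allocation n m), feasible T ->
     welfare v T s / (k + 3)%:R <= kHL_welfare v chRT chRS s).
Proof.
move=> hk hv hRT hRS; split; first split.
- by move=> l _; apply: RT_ic.
- by move=> A; apply: RS_ic.
move=> s T hT; rewrite /kHL_welfare; apply: alg.
- by rewrite ltr0n; lia.
- by rewrite ltr0n expn_gt0.
- by rewrite -natrD; congr (_%:R); lia.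
- exact: approx.
Qed.
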